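(* Let $K\ge 2$, let $s\in(0,1)$, and let $q_1\ge q_2\ge\cdots\ge q_K>0$ satisfy $\sum_{i=1}^K q_i+s=1$. Let $B_1\ge B_2\ge\cdots$ be the base values of all words arranged in non-increasing order, as defined in the context. Put $\alpha_i=\log_{q_1} q_i$, so that $1=\alpha_1\le\alpha_2\le\cdots\le\alpha_K$, and let $R_0>1$ be the unique positive root of $\sum_{i=1}^K X^{-\alpha_i}=1$. Then there is a constant $b\in(0,1)$ such that for every rank $r\ge 1$, $$\frac{b}{R_0}\,B_r^{\log_{q_1}R_0}\;<\;r\;<\;\frac{R_0}{R_0-1}\,B_r^{\log_{q_1}R_0}.$$ Equivalently, writing $-\beta=1/\log_{q_1}R_0=\log q_1/\log R_0$ (so $\beta>0$ and $\beta$ is the solution of $\sum_{i=1}^K q_i^{1/\beta}=1$), there are constants $0<C_1\le C_2$ with $C_1B_r^{-1/\beta}<r<C_2B_r^{-1/\beta}$ for all $r\ge1$.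
   Context: Monkey model: a keyboard has $K$ letters $L_1,\dots,L_K$ struck independently with probabilities $q_1,\dots,q_K$ and a space character with probability $s$. A word is a finite (possibly empty) string $L_{i_1}\cdots L_{i_n}$ of letters ($n\ge0$) followed by a space; it has probability $q_{i_1}\cdots q_{i_n}s$. Its base value is $B=q_{i_1}\cdots q_{i_n}$ (the empty word has base value $1$). The base values of all finitely long words, listed with multiplicity in non-increasing order with ties broken by alphabetical order, are denoted $B_1=1\ge B_2\ge\cdots$; $r$ is called the rank of $B_r$. *)

(* Defs.v *)
From Stdlib Require Import Reals List.
Open Scope R_scope.

(* Letters L_1,...,L_K are encoded as the naturals 0,...,K-1 (L_{i+1} ~ i);
   q : nat -> R gives their probabilities (q i = q_{i+1}). *)

(* A word (its letter string, without the trailing space) over a K-letter alphabet. *)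
Definition is_word (K : nat) (w : list nat) : Prop :=
  Forall (fun a => (a < K)%nat) w.

Definition base_value (q : nat -> R) (w : list nat) : R :=
  fold_right (fun a acc => q a * acc) 1 w.

Fixpoint alph_lt (u v : list nat) : Prop :=
  match u, v with
  | nil, _ :: _ => True
  | a :: u', b :: v' => (a < b)%nat \/ (a = b /\ alph_lt u' v')
  | _, _ => False
  end.

Definition precedes (q : nat -> R) (w' w : list nat) : Prop :=
  base_value q w' > base_value q w \/
  (base_value q w' = base_value q w /\ alph_lt w' w).

Definition has_rank (K : nat) (q : nat -> R) (w : list nat) (r : nat) : Prop :=
  exists l : list (list nat),
    NoDup l /\
    (forall w', In w' l <-> (is_word K w' /\ precedes q w' w)) /\
    r = S (length l).

(* Main.v *)
Require Import Defs.
From Stdlib Require Import Reals List Lra Lia Bool.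
Open Scope R_scope.
Local Open Scope bool_scope.
Local Open Scope R_scope.



Lemma filter_or_len {A} (f g : A -> bool) (l : list A) :
  (forall a, f a = true -> g a = false) ->
  length (filter (fun a => f a || g a) l) = (length (filter f l) + length (filter g l))%nat.
Proof.
  intros H; induction l as [|a l IH]; simpl; auto.
  destruct (f a) eqn:Ef; simpl.
  - rewrite (H a Ef). simpl. rewrite IH. reflexivity.
  - destruct (g a); simpl; rewrite IH; lia.
Qed.

Lemma filter_all {A} (f : A -> bool) (l : list A) :
  (forall a, In a l -> f a = true) -> filter f l = l.
Proof.
  induction l as [|a l IH]; simpl; intros H; auto.
  rewrite (H a (or_introl eq_refl)). f_equal. apply IH; auto.
Qed.

Lemma nodup_nils (m : list (list nat)) :
  NoDup m -> (forall x, In x m -> x = nil) -> (length m <= 1)%nat.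
Proof.
  intros Hd H. destruct m as [|a [|b m]]; simpl; try lia.
  exfalso. inversion Hd; subst. apply H2.
  rewrite (H a (or_introl eq_refl)), (H b (or_intror (or_introl eq_refl))).
  left; reflexivity.
Qed.

Lemma nodup_map_cons (k : nat) (m : list (list nat)) :
  NoDup m -> NoDup (map (cons k) m).
Proof.
  induction 1; simpl; constructor; auto.
  intros Hin. apply in_map_iff in Hin. destruct Hin as [y [Hy Hy']].
  injection Hy as ->. auto.
Qed.

Definition hd_is (i : nat) (w : list nat) : bool :=
  match w with a :: _ => Nat.eqb a i | nil => false end.
Definition isnil (w : list nat) : bool :=
  match w with nil => true | _ => false end.
Definition hd_lt (k : nat) (w : list nat) : bool :=
  match w with a :: _ => Nat.ltb a k | nil => false end.

Lemma nodup_tails (i : nat) (l : list (list nat)) :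
  NoDup l -> NoDup (map (@tl nat) (filter (hd_is i) l)).
Proof.
  induction 1 as [|a l Ha Hd IH]; simpl; [constructor|].
  destruct (hd_is i a) eqn:E; simpl; auto.
  constructor; auto.
  intros Hin. apply in_map_iff in Hin. destruct Hin as [b [Hb Hb']].
  apply filter_In in Hb'. destruct Hb' as [Hbl Hbi].
  destruct a as [|a a']; [discriminate|]. destruct b as [|b b']; [discriminate|].
  simpl in *. apply Nat.eqb_eq in E, Hbi. subst. apply Ha. exact Hbl.
Qed.

Lemma alph_lt_irrefl (u : list nat) : ~ alph_lt u u.
Proof.
  induction u as [|a u IH]; simpl; [tauto|]. intros [H|[_ H]]; [lia|auto].
Qed.

Lemma bound_len (l : list (list nat)) : exists n, forall w, In w l -> (length w <= n)%nat.
Proof.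
  induction l as [|a l [n IH]]; [exists 0%nat; simpl; tauto|].
  exists (Nat.max (length a) n). intros w [<-|H]; [lia|]. specialize (IH w H); lia.
Qed.

Fixpoint psum (p : nat -> R) (k : nat) : R :=
  match k with O => 0 | S k => psum p k + p k end.

Lemma psum_sum (p : nat -> R) n : psum p (S n) = sum_f_R0 p n.
Proof. induction n as [|n IH]; [simpl; ring|]. change (psum p (S n) + p (S n) = sum_f_R0 p n + p (S n)). rewrite IH. reflexivity. Qed.

Lemma base_le1 K q w : (forall i, (i < K)%nat -> 0 < q i <= 1) -> is_word K w ->
  0 < base_value q w <= 1.
Proof.
  intros Hq Hw. induction Hw; simpl; [lra|].
  destruct (Hq x H). destruct IHHw. split; [apply Rmult_lt_0_compat; auto|].
  rewrite <- (Rmult_1_l 1). apply Rmult_le_compat; lra.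
Qed.


Lemma upper_count (K : nat) (q : nat -> R) (phi : R -> R) (p : nat -> R) (R0 : R)
  (hq : forall i, (i < K)%nat -> 0 < q i <= 1)
  (hphi : forall i x, (i < K)%nat -> 0 < x -> phi (x / q i) = phi x * p i)
  (hphi1 : forall x, 0 < x <= 1 -> 1 <= phi x)
  (hp : forall i, (i < K)%nat -> 0 <= p i /\ R0 * p i <= 1)
  (hps : psum p K = 1) (hR : 1 < R0) :
  forall n x l, 0 < x <= 1 -> NoDup l ->
    (forall w, In w l -> is_word K w /\ (length w <= n)%nat /\ x <= base_value q w) ->
    INR (length l) <= (R0 * phi x - 1) / (R0 - 1).
Proof.
  induction n as [|n IH]; intros x l Hx Hd Hl.
  - assert (length l <= 1)%nat.
    { apply nodup_nils; auto. intros w Hw. destruct (Hl w Hw) as [_ [H _]].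
      destruct w; simpl in H; auto; lia. }
    apply Rle_trans with 1. { replace 1 with (INR 1) by reflexivity. apply le_INR; auto. }
    specialize (hphi1 x Hx). apply Rmult_le_reg_r with (R0 - 1); [lra|].
    unfold Rdiv; rewrite Rmult_assoc, Rinv_l; [|lra]. nra.
  - set (P k w := isnil w || hd_lt k w).
    set (c := (R0 * phi x - R0) / (R0 - 1)).
    assert (Hinner : forall k, (k <= K)%nat ->
      INR (length (filter (P k) l)) <= 1 + c * psum p k).
    { induction k as [|k IHk]; intros Hk.
      - simpl. rewrite Rmult_0_r, Rplus_0_r.
        replace 1 with (INR 1) by reflexivity. apply le_INR.
        apply nodup_nils. apply NoDup_filter; auto.
        intros w Hw. apply filter_In in Hw. destruct Hw as [_ Hw].
        destruct w; auto. unfold P in Hw; simpl in Hw. discriminate.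
      - rewrite (filter_ext _ (fun w => P k w || hd_is k w)).
        2:{ intros [|a w]; unfold P; simpl; auto.
            destruct (Nat.ltb_spec a (S k)), (Nat.ltb_spec a k), (Nat.eqb_spec a k);
              auto; lia. }
        rewrite filter_or_len.
        2:{ intros [|a w]; unfold P; simpl; auto. intros H.
            destruct (Nat.ltb_spec a k), (Nat.eqb_spec a k); auto; try discriminate; lia. }
        rewrite plus_INR. simpl psum.
        assert (Hk' : (k < K)%nat) by lia.
        specialize (IHk ltac:(lia)).
        destruct (hp k Hk') as [hp0 hp1]. destruct (hq k Hk') as [hq0 hq1].
        assert (Hphi : 1 <= phi x) by auto.
        set (l' := map (@tl nat) (filter (hd_is k) l)).
        assert (Hlen : length (filter (hd_is k) l) = length l') by (unfold l'; rewrite length_map; auto).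
        assert (Hl' : forall w, In w l' -> is_word K w /\ (length w <= n)%nat /\ x / q k <= base_value q w).
        { intros w Hw. unfold l' in Hw. apply in_map_iff in Hw. destruct Hw as [v [Hv Hv']].
          apply filter_In in Hv'. destruct Hv' as [Hvl Hvi].
          destruct v as [|a v]; [discriminate|]. simpl in Hvi, Hv. apply Nat.eqb_eq in Hvi. subst.
          destruct (Hl _ Hvl) as [Hw [Hn Hb]]. inversion Hw; subst.
          simpl in Hn, Hb. repeat split; auto; try lia.
          apply Rmult_le_reg_l with (q k); auto. unfold Rdiv. rewrite <- Rmult_assoc, (Rmult_comm (q k) x), Rmult_assoc, Rinv_r; lra. }
        assert (Hb : INR (length l') <= c * p k).
        { destruct (Rle_dec (x / q k) 1) as [Hle|Hgt].
          - assert (0 < x / q k) by (apply Rdiv_lt_0_compat; lra).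
            eapply Rle_trans. apply (IH (x / q k) l'); auto.
            + unfold l'. apply nodup_tails; auto.
            + rewrite hphi by (auto; lra). unfold c.
              apply Rmult_le_reg_r with (R0 - 1); [lra|].
              unfold Rdiv. rewrite !Rmult_assoc, Rinv_l by lra. replace ((R0 * phi x - R0) * (/ (R0 - 1) * (p k * (R0 - 1)))) with ((R0 * phi x - R0) * p k) by (field; lra). nra.
          - destruct l' as [|w l'']. 
            + simpl. unfold c. apply Rmult_le_pos; auto.
              apply Rmult_le_pos; [nra|]. left; apply Rinv_0_lt_compat; lra.
            + exfalso. destruct (Hl' w (or_introl eq_refl)) as [Hw [_ Hb]].
              pose proof (base_le1 K q w hq Hw). lra. }
        rewrite Hlen. lra. }
    specialize (Hinner K (le_n K)). rewrite hps in Hinner.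
    rewrite filter_all in Hinner.
    + eapply Rle_trans; [exact Hinner|]. unfold c. apply Req_le. field. lra.
    + intros w Hw. destruct (Hl w Hw) as [Hww _]. unfold P.
      destruct w as [|a w]; simpl; auto. inversion Hww; subst.
      apply Nat.ltb_lt; auto.
Qed.


Lemma lower_count (K : nat) (q : nat -> R) (phi : R -> R) (p : nat -> R) (R0 : R)
  (hK : (2 <= K)%nat)
  (hq : forall i, (i < K)%nat -> 0 < q i)
  (hphi : forall i x, (i < K)%nat -> 0 < x -> phi (x / q i) = phi x * p i)
  (hphi1 : forall x, 1 <= x -> phi x <= 1)
  (hp : forall i, (i < K)%nat -> 0 <= p i /\ R0 * p i <= 1)
  (hps : psum p K = 1) (hR : 1 < R0) :
  forall n x, 0 < x -> phi x <= R0 ^ n ->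
    exists m, NoDup m /\ (forall w, In w m -> is_word K w /\ x < base_value q w) /\
      (phi x - 1) / (INR K - 1) <= INR (length m).
Proof.
  assert (HK : 1 < INR K) by (replace 1 with (INR 1) by reflexivity; apply lt_INR; lia).
  assert (Hnil : forall x, phi x <= 1 -> exists m, NoDup m /\ (forall w, In w m -> is_word K w /\ x < base_value q w) /\
      (phi x - 1) / (INR K - 1) <= INR (length m)).
  { intros x Hx. exists nil. split; [constructor|]. split; [simpl; tauto|].
    simpl. unfold Rdiv. rewrite <- (Rmult_0_l (/ (INR K - 1))). apply Rmult_le_compat_r; [left; apply Rinv_0_lt_compat; lra|lra]. }
  induction n as [|n IH]; intros x Hx Hn.
  - apply Hnil. simpl in Hn. lra.
  - destruct (Rle_dec 1 x) as [H1|H1]; [apply Hnil; auto|].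
    assert (Hinner : forall k, (k <= K)%nat -> exists m, NoDup m /\
       (forall w, In w m -> is_word K w /\ x < base_value q w /\ hd_lt k w = true) /\
       (phi x * psum p k - INR k) / (INR K - 1) <= INR (length m)).
    { induction k as [|k IHk]; intros Hk.
      - exists nil. split; [constructor|]. split; [simpl; tauto|]. simpl. unfold Rdiv. lra.
      - destruct (IHk ltac:(lia)) as [m [Hm1 [Hm2 Hm3]]].
        assert (Hk' : (k < K)%nat) by lia.
        destruct (hp k Hk') as [hp0 hp1]. pose proof (hq k Hk') as hq0.
        assert (Hxq : 0 < x / q k) by (apply Rdiv_lt_0_compat; lra).
        destruct (IH (x / q k) Hxq) as [mk [Hk1 [Hk2 Hk3]]].
        { rewrite hphi by auto. simpl in Hn.
          apply Rle_trans with (R0 * R0 ^ n * p k); [apply Rmult_le_compat_r; auto|].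
          rewrite (Rmult_comm R0), Rmult_assoc. rewrite <- (Rmult_1_r (R0 ^ n)) at 2.
          apply Rmult_le_compat_l; auto. apply pow_le; lra. }
        exists (m ++ map (cons k) mk). split; [|split].
        + apply NoDup_app; auto. apply nodup_map_cons; auto.
          intros a Ha Hb. apply in_map_iff in Hb. destruct Hb as [v [<- _]].
          destruct (Hm2 _ Ha) as [_ [_ Hlt]]. simpl in Hlt. apply Nat.ltb_lt in Hlt. lia.
        + intros w Hw. apply in_app_or in Hw. destruct Hw as [Hw|Hw].
          * destruct (Hm2 _ Hw) as [A [B C]]. repeat split; auto.
            destruct w; simpl in *; auto. apply Nat.ltb_lt in C. apply Nat.ltb_lt. lia.
          * apply in_map_iff in Hw. destruct Hw as [v [<- Hv]].
            destruct (Hk2 _ Hv) as [A B]. repeat split.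
            -- constructor; auto.
            -- simpl. apply Rmult_lt_reg_l with (/ q k). apply Rinv_0_lt_compat; auto.
               rewrite <- Rmult_assoc, Rinv_l, Rmult_1_l by lra.
               rewrite Rmult_comm. exact B.
            -- simpl. apply Nat.ltb_lt. lia.
        + rewrite length_app, length_map, plus_INR. simpl psum. rewrite S_INR.
          rewrite hphi in Hk3 by auto.
          replace ((phi x * (psum p k + p k) - (INR k + 1)) / (INR K - 1)) with
            ((phi x * psum p k - INR k) / (INR K - 1) + (phi x * p k - 1) / (INR K - 1)) by (field; lra).
          lra. }
    destruct (Hinner K (le_n K)) as [m [Hm1 [Hm2 Hm3]]].
    exists (nil :: m). split; [|split].
    + constructor; auto. intros Hin. destruct (Hm2 _ Hin) as [_ [_ C]]. discriminate.
    + intros w [<-|Hw]. split; [constructor|simpl; lra]. destruct (Hm2 _ Hw); tauto.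
    + rewrite hps in Hm3. simpl length. rewrite S_INR.
      replace ((phi x - 1) / (INR K - 1)) with ((phi x * 1 - INR K) / (INR K - 1) + 1) by (field; lra).
      lra.
Qed.

Lemma exp_le' x y : x <= y -> exp x <= exp y.
Proof. intros H. destruct (Rle_lt_or_eq_dec _ _ H) as [H'|H']; [left; apply exp_increasing; auto|subst; lra]. Qed.

Lemma ln_le' x y : 0 < x -> x <= y -> ln x <= ln y.
Proof. intros H0 H. destruct (Rle_lt_or_eq_dec _ _ H) as [H'|H']; [left; apply ln_increasing; auto|subst; lra]. Qed.

Lemma term_le_sum (f : nat -> R) n i : (forall j, (j <= n)%nat -> 0 <= f j) -> (i <= n)%nat -> f i <= sum_f_R0 f n.
Proof.
  induction n as [|n IH]; intros Hf Hi.
  - replace i with 0%nat by lia. simpl. lra.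
  - simpl. destruct (Nat.eq_dec i (S n)) as [->|Hne]; [|].
    + assert (0 <= sum_f_R0 f n).
      { clear IH Hi. induction n as [|n IHn]; simpl; [apply Hf; lia|].
        assert (0 <= f (S n)) by (apply Hf; lia). assert (0 <= sum_f_R0 f n) by (apply IHn; intros; apply Hf; lia). lra. }
      lra.
    + assert (0 <= f (S n)) by (apply Hf; lia). assert (f i <= sum_f_R0 f n) by (apply IH; [intros; apply Hf|]; lia). lra.
Qed.

Lemma psum_ge (p : nat -> R) k : (forall i, (i < k)%nat -> 1 <= p i) -> INR k <= psum p k.
Proof.
  induction k as [|k IH]; intros H; [simpl; lra|]. simpl psum.
  rewrite S_INR. assert (1 <= p k) by (apply H; lia). assert (INR k <= psum p k) by (apply IH; intros; apply H; lia). lra.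
Qed.

Lemma q_le_q0 (K : nat) (q : nat -> R) (hqmono : forall i, (S i < K)%nat -> q (S i) <= q i) :
  forall i, (i < K)%nat -> q i <= q 0%nat.
Proof.
  induction i; intros H; [lra|]. specialize (hqmono i H). assert (q i <= q 0%nat) by (apply IHi; lia). lra.
Qed.

Theorem mainTheorem1
  (K : nat) (q : nat -> R) (s R0 : R)
  (hK : (2 <= K)%nat)
  (hs : 0 < s < 1)
  (hqpos : forall i, (i < K)%nat -> 0 < q i)
  (hqmono : forall i, (S i < K)%nat -> q (S i) <= q i)
  (hsum : sum_f_R0 q (K - 1) + s = 1)
  (hR0pos : 0 < R0)
  (hR0 : sum_f_R0 (fun i => Rpower R0 (- (ln (q i) / ln (q 0%nat)))) (K - 1) = 1) :
  exists b : R, 0 < b < 1 /\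
    forall (w : list nat) (r : nat),
      is_word K w -> has_rank K q w r ->
      b / R0 * Rpower (base_value q w) (ln R0 / ln (q 0%nat)) < INR r /\
      INR r < R0 / (R0 - 1) * Rpower (base_value q w) (ln R0 / ln (q 0%nat)).
Proof.
  set (beta := ln R0 / ln (q 0%nat)).
  set (phi := fun x => Rpower x beta).
  set (p := fun i => Rpower R0 (- (ln (q i) / ln (q 0%nat)))).
  assert (hq1 : forall i, (i < K)%nat -> 0 < q i <= 1 /\ q i < 1).
  { intros i Hi. split; [split; auto|]; (assert (q i <= sum_f_R0 q (K - 1)) by
      (apply term_le_sum; [intros; apply Rlt_le, hqpos; lia|lia])); lra. }
  assert (HK0 : (0 < K)%nat) by lia.
  assert (hq0 : 0 < q 0%nat < 1) by (destruct (hq1 0%nat HK0) as [[? ?] ?]; split; auto).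
  assert (hl0 : ln (q 0%nat) < 0) by (rewrite <- ln_1; apply ln_increasing; lra).
  assert (ha : forall i, (i < K)%nat -> 1 <= ln (q i) / ln (q 0%nat)).
  { intros i Hi. assert (ln (q i) <= ln (q 0%nat)) by (apply ln_le'; [apply hqpos; auto|apply q_le_q0 with K; auto]).
    set (a := ln (q i) / ln (q 0%nat)).
    assert (a * ln (q 0%nat) = ln (q i)) by (unfold a; field; lra). nra. }
  assert (hps : psum p K = 1).
  { replace K with (S (K - 1)) by lia. rewrite psum_sum. exact hR0. }
  assert (hR : 1 < R0).
  { destruct (Rlt_le_dec 1 R0) as [H|H]; auto. exfalso.
    assert (INR K <= psum p K).
    { apply psum_ge. intros i Hi. unfold p, Rpower. rewrite <- exp_0. apply exp_le'.
      assert (ln R0 <= 0) by (rewrite <- ln_1; apply ln_le'; auto). specialize (ha i Hi). nra. }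
    assert (2 <= INR K) by (replace 2 with (INR 2) by (simpl; lra); apply le_INR; auto). lra. }
  assert (hlR : 0 < ln R0) by (rewrite <- ln_1; apply ln_increasing; lra).
  assert (hbeta : beta < 0).
  { unfold beta, Rdiv. apply Rmult_pos_neg; auto. apply Rinv_lt_0_compat; auto. }
  assert (hphi : forall i x, (i < K)%nat -> 0 < x -> phi (x / q i) = phi x * p i).
  { intros i x Hi Hx. unfold phi, p, Rpower, beta. pose proof (hqpos i Hi).
    change (x / q i) with (x * / q i). rewrite ln_mult, ln_Rinv by (auto; apply Rinv_0_lt_compat; auto).
    rewrite <- exp_plus. f_equal. field. lra. }
  assert (hp : forall i, (i < K)%nat -> 0 <= p i /\ R0 * p i <= 1).
  { intros i Hi. split; [unfold p, Rpower; left; apply exp_pos|].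
    unfold p, Rpower. rewrite <- (exp_ln R0) at 1 by lra. rewrite <- exp_plus, <- exp_0.
    apply exp_le'. specialize (ha i Hi). nra. }
  assert (hphiU : forall x, 0 < x <= 1 -> 1 <= phi x).
  { intros x Hx. unfold phi, Rpower. rewrite <- exp_0. apply exp_le'.
    assert (ln x <= 0) by (rewrite <- ln_1; apply ln_le'; lra). nra. }
  assert (hphiL : forall x, 1 <= x -> phi x <= 1).
  { intros x Hx. unfold phi, Rpower. rewrite <- exp_0. apply exp_le'.
    assert (0 <= ln x) by (rewrite <- ln_1; apply ln_le'; lra). nra. }
  assert (hqK : forall i, (i < K)%nat -> 0 < q i <= 1) by (intros; apply hq1; auto).
  assert (HK : 2 <= INR K) by (replace 2 with (INR 2) by (simpl; lra); apply le_INR; auto).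
  exists (/ INR K). split.
  { split; [apply Rinv_0_lt_compat; lra|]. rewrite <- Rinv_1. apply Rinv_lt_contravar; lra. }
  intros w r Hw [l [Hd [Hl Hr]]].
  fold beta. change (Rpower (base_value q w) beta) with (phi (base_value q w)).
  set (y := base_value q w).
  assert (Hy : 0 < y <= 1) by (apply base_le1 with K; auto).
  assert (Hphiy : 1 <= phi y) by auto.
  split.
  - destruct (Pow_x_infinity R0 ltac:(rewrite Rabs_right; lra) (phi y)) as [N HN].
    specialize (HN N (le_n N)). rewrite Rabs_right in HN by (left; apply pow_lt; lra).
    destruct (lower_count K q phi p R0 hK hqpos hphi hphiL hp hps hR N y (proj1 Hy) ltac:(lra))
      as [m [Hm1 [Hm2 Hm3]]].
    assert (Hlen : (length m <= length l)%nat).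
    { apply NoDup_incl_length; auto. intros v Hv. apply Hl. destruct (Hm2 v Hv). split; auto. left; auto. }
    apply le_INR in Hlen. rewrite Hr, S_INR.
    assert (H1 : phi y / INR K * / R0 < phi y / (INR K - 1)).
    { unfold Rdiv. rewrite Rmult_assoc. apply Rmult_lt_compat_l; [lra|].
      rewrite <- Rinv_mult. assert (0 < INR K * R0) by nra. apply Rinv_lt_contravar; [apply Rmult_lt_0_compat; lra|nra]. }
    assert (H2 : phi y / (INR K - 1) <= 1 + (phi y - 1) / (INR K - 1)).
    { replace (1 + (phi y - 1) / (INR K - 1)) with (phi y / (INR K - 1) + (INR K - 2) / (INR K - 1)) by (field; lra).
      assert (0 <= (INR K - 2) / (INR K - 1)) by (unfold Rdiv; apply Rmult_le_pos; [lra|left; apply Rinv_0_lt_compat; lra]). lra. }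
    replace (/ INR K / R0 * phi y) with (phi y / INR K * / R0) by (field; lra). lra.
  - destruct (bound_len (w :: l)) as [n Hn].
    assert (Hu := upper_count K q phi p R0 hqK hphi hphiU hp hps hR n y (w :: l) Hy).
    rewrite Hr. change (S (length l)) with (length (w :: l)).
    eapply Rle_lt_trans; [apply Hu|].
    + constructor; auto. intros Hin. apply Hl in Hin. destruct Hin as [_ [Hp|[_ Hp]]].
      * unfold y in *. lra.
      * apply (alph_lt_irrefl w); auto.
    + intros v Hv. split; [|split]; [| apply Hn; auto|].
      * destruct Hv as [<-|Hv]; auto. apply Hl; auto.
      * destruct Hv as [<-|Hv]; [unfold y; lra|]. apply Hl in Hv. destruct Hv as [_ [Hp|[Hp _]]]; unfold y; lra.
    + replace (R0 / (R0 - 1) * phi y) with ((R0 * phi y) * / (R0 - 1)) by (field; lra).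
      unfold Rdiv. apply Rmult_lt_compat_r; [apply Rinv_0_lt_compat; lra|lra].
Qed.
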